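(* Let $\lambda\in\mathbb R$ with $\alpha=1-\lambda>0$, and let $\mathcal Q_\lambda$ be a $\lambda$-exponential family satisfying Assumptions A and B. Let $x_1,\dots,x_N\in\mathcal X$ be data such that $x_i\in S_\vartheta$ for all $i$ and all $\vartheta\in\operatorname{dom}\varphi_\lambda$. Set $\bar T=\frac1N\sum_{i=1}^NT(x_i)$ and suppose there exists $\vartheta_*\in\operatorname{dom}\varphi_\lambda$ with $q^{(\alpha)}_{\vartheta_*}(T)=\bar T$. Let $\ell(\vartheta)=\sum_{i=1}^N\log q_\vartheta(x_i)$. (i) If $\lambda=0$, $\vartheta_*$ maximizes $\ell$ over $\operatorname{dom}\varphi_\lambda$. (ii) If $\lambda<0$, $\vartheta_*$ maximizes over $\operatorname{dom}\varphi_\lambda$ the function $\vartheta\mapsto N\big(c_\lambda(\vartheta,\bar T)-\varphi_\lambda(\vartheta)\big)$, which is a lower bound of $\ell$ on $\operatorname{dom}\varphi_\lambda$; moreover $\frac1N\sum_{i=1}^N\log q_{\vartheta_*}(x_i)\ge\psi_\lambda(\vartheta_* )$. (iii) If $\lambda>0$, $\vartheta_*$ maximizes over $\operatorname{dom}\varphi_\lambda$ the function $\vartheta\mapsto N\big(c_\lambda(\vartheta,\bar T)-\varphi_\lambda(\vartheta)\big)$, which is an upper bound of $\ell$ on $\operatorname{dom}\varphi_\lambda$; moreover $\frac1N\sum_{i=1}^N\log q_\vartheta(x_i)\le\psi_\lambda(\vartheta_* )$ for all $\vartheta\in\operatorname{dom}\varphi_\lambda$.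
   Context: $\mathcal H$ is a finite-dimensional real Hilbert space; $\mathcal X$ a measurable space with measure $m$; $p(f)=\int fp\,dm$. Conventions $\log s=-\infty$ for $s\le0$, $\exp(-\infty)=0$. Coupling $c_\lambda(u,v)=\frac1\lambda\log(1+\lambda\langle u,v\rangle)$ ($\lambda\ne0$), $c_0=\langle\cdot,\cdot\rangle$. For measurable $T:\mathcal X\to\mathcal H$: $\varphi_\lambda(\vartheta)=\log\int\exp(c_\lambda(\vartheta,T))dm$, $\operatorname{dom}\varphi_\lambda=\{\varphi_\lambda<+\infty\}$, $q_\vartheta=\exp(c_\lambda(\vartheta,T)-\varphi_\lambda(\vartheta))$, $\mathcal Q_\lambda=\{q_\vartheta:\vartheta\in\operatorname{dom}\varphi_\lambda\}$, support $S_\vartheta=\{x:1+\lambda\langle\vartheta,T(x)\rangle>0\}$. Escort $p^{(\alpha)}=p^\alpha/\int p^\alpha dm$; $p_{|Y}=p\mathbf 1_Y$. Rényi entropy $H_\alpha(p)=\frac1{1-\alpha}\log\int p^\alpha dm$ ($\alpha\ne1$), $H_1(p)=-\int p\log p\,dm$; $\psi_\lambda(\vartheta)=-H_\alpha(q_\vartheta)$. Compatibility: $p$ is $q_\vartheta$-compatible if $\int p_{|S_\vartheta}^\alpha dm\in(0,\infty)$ and $\int Tp_{|S_\vartheta}^\alpha dm$ has finite components; $\mathcal Q_\lambda$-compatible if for every $\vartheta\in\operatorname{dom}\varphi_\lambda$. Assumption A: $\alpha>0$ and $\varphi_\lambda$ proper (never $-\infty$, nonempty domain). Assumption B: there is a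 nonempty $S_\lambda$ with $S_\vartheta=S_\lambda$ for all $\vartheta\in\operatorname{dom}\varphi_\lambda$, and each $q_\vartheta\in\mathcal Q_\lambda$ is $\mathcal Q_\lambda$-compatible. *)

(* Defs.v *)
From HB Require Import structures.
From mathcomp Require Import all_boot all_order all_algebra.
From mathcomp Require Import all_classical all_reals all_analysis.
Set Implicit Arguments. Unset Strict Implicit. Unset Printing Implicit Defensive.
Import Order.TTheory GRing.Theory Num.Theory.
Local Open Scope ring_scope.
Local Open Scope classical_set_scope.

Section LambdaExp.
Context {R : realType} {n : nat} {d : measure_display} {X : measurableType d}.

(* The finite-dimensional real Hilbert space H is modelled as 'rV[R]_n
   with the standard inner product. *)
Definition dot (u v : 'rV[R]_n) : R := \sum_(i < n) u 0 i * v 0 i.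

Definition elog (s : \bar R) : \bar R :=
  match s with
  | EFin r => if 0 < r then (ln r)%:E else -oo%E
  | +oo%E => +oo%E
  | -oo%E => -oo%E
  end.

Definition eexp (s : \bar R) : \bar R :=
  match s with
  | EFin r => (expR r)%:E
  | +oo%E => +oo%E
  | -oo%E => 0%E
  end.

(* coupling c_lambda; outside {1 + lambda <u,v> > 0} it is -oo, so that
   exp(c_lambda) vanishes there (cf. the support S_theta). *)
Definition clam (l : R) (u v : 'rV[R]_n) : \bar R :=
  if l == 0 then (dot u v)%:E
  else if 0 < 1 + l * dot u v then (ln (1 + l * dot u v) / l)%:E
  else -oo%E.

Variables (m : {measure set X -> \bar R}) (T : X -> 'rV[R]_n).

Definition phi (l : R) (th : 'rV[R]_n) : \bar R :=
  elog (\int[m]_x eexp (clam l th (T x)))%E.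

Definition dom_phi (l : R) : set 'rV[R]_n := [set th | (phi l th < +oo)%E].

(* the density q_theta (meaningful for theta in dom_phi) *)
Definition qdens (l : R) (th : 'rV[R]_n) (x : X) : R :=
  fine (eexp (clam l th (T x) - phi l th)%E).

Definition supp (l : R) (th : 'rV[R]_n) : set X :=
  [set x | 0 < 1 + l * dot th (T x)].

Definition compatible (l : R) (p : X -> R) (th : 'rV[R]_n) : Prop :=
  let pS := fun x => if `[< supp l th x >] then p x else 0 in
  (0 < \int[m]_x ((pS x) `^ (1 - l))%:E)%E /\
  (\int[m]_x ((pS x) `^ (1 - l))%:E < +oo)%E /\
  (forall i : 'I_n, m.-integrable setT (fun x => (T x 0 i * (pS x) `^ (1 - l))%:E)).

Definition Qcompatible (l : R) (p : X -> R) : Prop :=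
  forall th, dom_phi l th -> compatible l p th.

Definition assumptionA (l : R) : Prop :=
  0 < 1 - l /\ (forall th, phi l th <> -oo%E) /\ (exists th, dom_phi l th).

Definition assumptionB (l : R) : Prop :=
  (exists S : set X, S !=set0 /\ forall th, dom_phi l th -> supp l th = S) /\
  (forall th, dom_phi l th -> Qcompatible l (qdens l th)).

Definition escort_mean (l : R) (th : 'rV[R]_n) : 'rV[R]_n :=
  \row_(i < n) (fine (\int[m]_x (T x 0 i * (qdens l th x) `^ (1 - l))%:E)%E /
                fine (\int[m]_x ((qdens l th x) `^ (1 - l))%:E)%E).

Definition renyi (alpha : R) (p : X -> R) : \bar R :=
  if alpha == 1 then (- \int[m]_x (p x * ln (p x))%:E)%E
  else (((1 - alpha)^-1)%:E * elog (\int[m]_x ((p x) `^ alpha)%:E))%E.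

Definition psi (l : R) (th : 'rV[R]_n) : \bar R := (- renyi (1 - l) (qdens l th))%E.

End LambdaExp.

(* Main.v *)
Require Import Defs.
From HB Require Import structures.
From mathcomp Require Import all_boot all_order all_algebra.
From mathcomp Require Import all_classical all_reals all_analysis.
From mathcomp Require Import measurable_realfun.
From mathcomp Require Import ring lra.
Import Order.TTheory GRing.Theory Num.Theory.
Local Open Scope ring_scope.
Local Open Scope classical_set_scope.

Section Gen.
Context {R : realType} {d : measure_display} {X : measurableType d}.
Variable (m : {measure set X -> \bar R}).

Lemma int_ge0_fin (f : X -> R) : measurable_fun setT f -> (forall x, 0 <= f x) ->
  (\int[m]_x (f x)%:E < +oo)%E -> m.-integrable setT (EFin \o f).
Proof.
move=> mf f0 fin; apply/integrableP; split; first exact/measurable_EFinP.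
under eq_integral => y _ do rewrite /= ger0_norm ?f0 //.
exact: fin.
Qed.

Lemma Rint_EFin (f : X -> R) : m.-integrable setT (EFin \o f) ->
  (\int[m]_x (f x)%:E)%E = (\int[m]_x f x)%:E.
Proof. by move=> h; rewrite /Rintegral fineK //; exact: integrable_fin_num. Qed.

Lemma Rint_sum (I : Type) (s : seq I) (f : I -> X -> R) :
  (forall i, m.-integrable setT (EFin \o f i)) ->
  \int[m]_x (\sum_(i <- s) f i x) = \sum_(i <- s) \int[m]_x f i x.
Proof.
move=> hf; elim: s => [|a s IH].
  by under eq_Rintegral do rewrite big_nil; rewrite big_nil Rintegral_cst // mul0r.
under eq_Rintegral do rewrite big_cons.
rewrite big_cons RintegralD //; first by rewrite IH.
rewrite /comp; under eq_fun do rewrite -sumEFin.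
by apply: integrable_sum => // i _; exact: hf.
Qed.


Lemma intRZl (k : R) (f : X -> R) : m.-integrable setT (EFin \o f) ->
  m.-integrable setT (EFin \o (fun x => k * f x)).
Proof.
move=> h; apply: (eq_integrable measurableT _ _ _ (integrableZl measurableT k h)) => x _ /=.
by rewrite EFinM.
Qed.

Lemma intRZr (k : R) (f : X -> R) : m.-integrable setT (EFin \o f) ->
  m.-integrable setT (EFin \o (fun x => f x * k)).
Proof.
move=> h; apply: (eq_integrable measurableT _ _ _ (intRZl k f h)) => x _ /=.
by rewrite mulrC.
Qed.

Lemma intRD (f g : X -> R) : m.-integrable setT (EFin \o f) ->
  m.-integrable setT (EFin \o g) ->
  m.-integrable setT (EFin \o (fun x => f x + g x)).
Proof.
move=> hf hg; apply: (eq_integrable measurableT _ _ _ (integrableD measurableT hf hg)) => // x _ /=.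
Qed.

Lemma intRsum (I : Type) (s : seq I) (f : I -> X -> R) :
  (forall i, m.-integrable setT (EFin \o f i)) ->
  m.-integrable setT (EFin \o (fun x => \sum_(i <- s) f i x)).
Proof.
move=> hf; rewrite /comp; under eq_fun do rewrite -sumEFin.
by apply: integrable_sum => // i _; exact: hf.
Qed.

Lemma intRB (f g : X -> R) : m.-integrable setT (EFin \o f) ->
  m.-integrable setT (EFin \o g) ->
  m.-integrable setT (EFin \o (fun x => f x - g x)).
Proof.
move=> hf hg; apply: (eq_integrable measurableT _ _ _ (integrableB measurableT hf hg)) => // x _ /=.
Qed.

End Gen.

Section Cvx.
Context {R : realType}.
Lemma cvx (t a b : R) : 0 <= t -> t <= 1 ->
  expR (t * a + (1 - t) * b) <= t * expR a + (1 - t) * expR b.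
Proof.
move=> t0 t1; have := convex_expR (Itv01 t0 t1) a b.
by rewrite !convRE.
Qed.

Lemma cvx_neg (l a b : R) : l < 0 ->
  (1 - l) * expR b <= expR (l * a + (1 - l) * b) - l * expR a.
Proof.
move=> l0.
have al : 0 < 1 - l by lra.
have t0 : 0 <= (1 - l)^-1 by rewrite invr_ge0 ltW.
have t1 : (1 - l)^-1 <= 1 by rewrite invf_le1 //; lra.
have := cvx ((1 - l)^-1) (l * a + (1 - l) * b) a t0 t1.
have -> : (1 - l)^-1 * (l * a + (1 - l) * b) + (1 - (1 - l)^-1) * a = b.
  by field; rewrite gt_eqF.
move=> h; have h2 := ler_wpM2l (ltW al) h.
apply: (le_trans h2); rewrite le_eqVlt; apply/orP; left; apply/eqP.
by field; rewrite gt_eqF.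
Qed.

Lemma ln_jensen (N : nat) (y : 'I_N -> R) : (0 < N)%N -> (forall i, 0 < y i) ->
  \sum_i ln (y i) <= N%:R * ln (N%:R^-1 * \sum_i y i).
Proof.
move=> N0 yp.
have Npos : 0 < N%:R :> R by rewrite ltr0n.
have sp : 0 < \sum_i y i.
  apply: (lt_le_trans (yp (Ordinal N0))).
  rewrite (bigD1 (Ordinal N0)) //= lerDl sumr_ge0 // => i _.
  exact: ltW.
set M := N%:R^-1 * \sum_i y i.
have Mp : 0 < M by rewrite mulr_gt0 // invr_gt0.
have h i : ln (y i) <= ln M + (y i / M - 1).
  have hy : -1 < y i / M - 1.
    by rewrite ltrBrDr addrC subrr divr_gt0.
  have := le_ln1Dx hy.
  rewrite addrC subrK lnM ?posrE ?invr_gt0 // lnV ?posrE //.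
  move=> h; lra.
apply: (le_trans (ler_sum _ (fun i _ => h i))).
rewrite big_split /= sumr_const card_ord -mulr_natl big_split /= sumrN.
rewrite sumr_const card_ord -mulr_natl -mulr_suml.
have -> : (\sum_i y i) / M = N%:R.
  by rewrite /M invfM invrK mulrCA divff ?mulr1 // gt_eqF.
lra.
Qed.

End Cvx.

Section Aux.
Context {R : realType} {n : nat} {d : measure_display} {X : measurableType d}.
Variables (m : {measure set X -> \bar R}) (T : X -> 'rV[R]_n) (l : R).
Hypothesis hT : forall i : 'I_n, measurable_fun setT (fun y => T y 0 i).

Lemma dotZ (th v : 'rV[R]_n) (k : R) : dot th (k *: v) = k * dot th v.
Proof. by rewrite /dot mulr_sumr; apply: eq_bigr => i _; rewrite mxE mulrCA. Qed.

Lemma dot_sum (th : 'rV[R]_n) (I : Type) (s : seq I) (f : I -> 'rV[R]_n) :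
  dot th (\sum_(i <- s) f i) = \sum_(i <- s) dot th (f i).
Proof.
rewrite /dot; under eq_bigr do rewrite summxE mulr_sumr.
exact: exchange_big.
Qed.

Definition ee (th v : 'rV[R]_n) : R :=
  if l == 0 then expR (dot th v)
  else if 0 < 1 + l * dot th v then expR (ln (1 + l * dot th v) / l) else 0.

Lemma eexp_clam th v : eexp (clam l th v) = (ee th v)%:E.
Proof.
rewrite /clam /ee; case: ifP => //= _; case: ifP => //.
Qed.

Lemma ee_ge0 th v : 0 <= ee th v.
Proof. rewrite /ee; case: ifP => _; first exact: expR_ge0.
by case: ifP => _ //; exact: expR_ge0. Qed.

Lemma meas_dot th : measurable_fun setT (fun x => dot th (T x)).
Proof.
rewrite /dot; apply: measurable_sum => i.
by apply: measurable_funM => //; exact: hT.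
Qed.

Lemma meas_ee th : measurable_fun setT (fun x => ee th (T x)).
Proof.
rewrite /ee; case: (l == 0).
  by apply: measurableT_comp => //; exact: meas_dot.
apply: measurable_fun_ifT.
- apply: measurable_fun_ltr => //; apply: measurable_funD => //.
  by apply: measurable_funM => //; exact: meas_dot.
- apply: measurableT_comp => //; apply: measurable_funM => //.
  apply: measurableT_comp => //; apply: measurable_funD => //.
  by apply: measurable_funM => //; exact: meas_dot.
- exact: measurable_cst.
Qed.


Definition Zf th := fine (\int[m]_x eexp (clam l th (T x)))%E.

Lemma int_e th : (\int[m]_x eexp (clam l th (T x)))%E = (\int[m]_x (ee th (T x))%:E)%E.
Proof. by apply: eq_integral => y _; rewrite eexp_clam. Qed.

Lemma domZ th : phi m T l th <> -oo%E -> dom_phi m T l th ->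
  [/\ 0 < Zf th, (\int[m]_x eexp (clam l th (T x)) = (Zf th)%:E)%E
    & phi m T l th = (ln (Zf th))%:E].
Proof.
have I0 : (0 <= \int[m]_x eexp (clam l th (T x)))%E.
  by apply: integral_ge0 => y _; rewrite eexp_clam lee_fin ee_ge0.
rewrite /dom_phi /phi /Zf /=.
move: I0; case: (\int[m]_x eexp (clam l th (T x)))%E => [r| |] //= I0.
by case: ifP => r0 // _ _.
Qed.

Lemma qdensE th : phi m T l th = (ln (Zf th))%:E -> 0 < Zf th ->
  forall y, qdens m T l th y = ee th (T y) / Zf th.
Proof.
move=> hp Z0 y; rewrite /qdens hp /clam /ee.
case: ifP => _ /=; first by rewrite expRB lnK.
case: ifP => _ /=; first by rewrite expRB lnK.
by rewrite mul0r.
Qed.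


Section dom.
Variable th : 'rV[R]_n.
Hypothesis hA : phi m T l th <> -oo%E.
Hypothesis hd : dom_phi m T l th.

Lemma ee_int : m.-integrable setT (EFin \o (fun y => ee th (T y))) /\
  \int[m]_x ee th (T x) = Zf th.
Proof.
have [Z0 hI hp] := domZ th hA hd.
have hi : m.-integrable setT (EFin \o (fun y => ee th (T y))).
  apply: int_ge0_fin; [exact: meas_ee|by move=> y; exact: ee_ge0|].
  by rewrite -int_e hI ltry.
by split => //; rewrite /Rintegral -int_e hI.
Qed.

Lemma qdens_fun : qdens m T l th = (fun y => ee th (T y) / Zf th).
Proof.
have [Z0 hI hp] := domZ th hA hd.
by apply/funext => y; rewrite qdensE.
Qed.

Lemma q_meas : measurable_fun setT (qdens m T l th).
Proof.
rewrite qdens_fun; apply: measurable_funM => //; exact: meas_ee.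
Qed.

Lemma q_int : m.-integrable setT (EFin \o qdens m T l th) /\
  \int[m]_x qdens m T l th x = 1.
Proof.
have [Z0 hI hp] := domZ th hA hd.
have [hi hr] := ee_int.
rewrite qdens_fun; split.
  exact: intRZr.
by rewrite RintegralZr // hr divff // gt_eqF.
Qed.

End dom.

Hypothesis al : 0 < 1 - l.
Hypothesis hA : assumptionA m T l.
Hypothesis hB : assumptionB m T l.
Variable ths : 'rV[R]_n.
Hypothesis hds : dom_phi m T l ths.

Lemma notNy th : phi m T l th <> -oo%E.
Proof. by case: hA => _ []. Qed.

Lemma supp_eq th : dom_phi m T l th -> supp T l th = supp T l ths.
Proof.
case: hB => [[S [_ hS]] _] hd.
by rewrite (hS _ hd) (hS _ hds).
Qed.

Definition A x := (qdens m T l ths x) `^ (1 - l).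
Definition W := \int[m]_x A x.

Lemma pS_eq x : (if `[< supp T l ths x >] then qdens m T l ths x else 0) =
  qdens m T l ths x.
Proof.
case: asboolP => // hx.
have [Z0 _ hp] := domZ ths (notNy ths) hds.
rewrite (qdensE ths hp Z0) /ee.
case: ifP => [/eqP l0|_]; first by exfalso; apply: hx; rewrite /supp /= l0 mul0r addr0.
case: ifP => [h|_]; last by rewrite mul0r.
by exfalso; apply: hx; rewrite /supp /= h.
Qed.

Lemma A_meas : measurable_fun setT A.
Proof.
have h := measurableT_comp (@measurable_powR R (1 - l)) (q_meas ths (notNy ths) hds).
exact: h.
Qed.

Lemma compat_s : compatible m T l (qdens m T l ths) ths.
Proof. by case: hB => _ h; exact: h. Qed.

Lemma A_int : m.-integrable setT (EFin \o A) /\ 0 < W.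
Proof.
have [h1 [h2 _]] := compat_s.
have e : (\int[m]_x ((if `[< supp T l ths x >] then qdens m T l ths x else 0) `^ (1 - l))%:E)%E
   = (\int[m]_x (A x)%:E)%E.
  by apply: eq_integral => x _; rewrite pS_eq.
rewrite e in h1 h2.
have hi : m.-integrable setT (EFin \o A).
  apply: int_ge0_fin => //; [exact: A_meas|by move=> x; exact: powR_ge0].
split => //.
by rewrite -lte_fin /W -Rint_EFin.
Qed.

Lemma TA_int i : m.-integrable setT (EFin \o (fun x => T x 0 i * A x)).
Proof.
have [_ [_ h3]] := compat_s.
apply: (eq_integrable measurableT _ _ _ (h3 i)) => x _ /=.
by rewrite pS_eq.
Qed.


Lemma dotA_eq th x : dot th (T x) * A x = \sum_(i < n) th 0 i * (T x 0 i * A x).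
Proof. by rewrite /dot mulr_suml; apply: eq_bigr => i _; rewrite mulrA. Qed.

Lemma dotA_int th : m.-integrable setT (EFin \o fun x => dot th (T x) * A x).
Proof.
have h := intRsum m _ (index_enum 'I_n) (fun i x => th 0 i * (T x 0 i * A x))
  (fun i => intRZl m (th 0 i) _ (TA_int i)).
apply: (eq_integrable measurableT _ _ _ h) => x _ /=.
by rewrite dotA_eq.
Qed.

Lemma dotA_R th : \int[m]_x (dot th (T x) * A x) =
  \sum_(i < n) th 0 i * \int[m]_x (T x 0 i * A x).
Proof.
under eq_Rintegral do rewrite dotA_eq.
rewrite Rint_sum; last by move=> i; exact: (intRZl m _ _ (TA_int i)).
by apply: eq_bigr => i _; rewrite RintegralZl //; exact: TA_int.
Qed.

Lemma dot_escort th : dot th (escort_mean m T l ths) =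
  (\int[m]_x (dot th (T x) * A x)) / W.
Proof.
rewrite dotA_R mulr_suml /dot; apply: eq_bigr => i _.
by rewrite mxE mulrA.
Qed.

Lemma gA_eq th x : (1 + l * dot th (T x)) * A x = A x + l * (dot th (T x) * A x).
Proof. by rewrite mulrDl mul1r mulrA. Qed.

Lemma gA_int th : m.-integrable setT (EFin \o fun x => (1 + l * dot th (T x)) * A x).
Proof.
have h := intRD m _ _ A_int.1 (intRZl m l _ (dotA_int th)).
apply: (eq_integrable measurableT _ _ _ h) => x _ /=.
by rewrite gA_eq.
Qed.

Lemma g_escort th : 1 + l * dot th (escort_mean m T l ths) =
  (\int[m]_x ((1 + l * dot th (T x)) * A x)) / W.
Proof.
under eq_Rintegral do rewrite gA_eq.
rewrite RintegralD //; last 2 first.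
- exact: A_int.1.
- exact: (intRZl m l _ (dotA_int th)).
rewrite RintegralZl //; last exact: dotA_int.
rewrite dot_escort -/W.
have W0 := A_int.2.
by field; rewrite gt_eqF.
Qed.

Lemma q_on th (hd : dom_phi m T l th) x : l != 0 -> 0 < 1 + l * dot th (T x) ->
  qdens m T l th x = expR (ln (1 + l * dot th (T x)) / l - ln (Zf th)).
Proof.
move=> l0 h; have [Z0 _ hp] := domZ th (notNy th) hd.
by rewrite (qdensE th hp Z0) /ee (negbTE l0) h expRB lnK.
Qed.

Lemma q_off th (hd : dom_phi m T l th) x : l != 0 -> ~~ (0 < 1 + l * dot th (T x)) ->
  qdens m T l th x = 0.
Proof.
move=> l0 h; have [Z0 _ hp] := domZ th (notNy th) hd.
by rewrite (qdensE th hp Z0) /ee (negbTE l0) (negbTE h) mul0r.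
Qed.

Lemma supp_iff th (hd : dom_phi m T l th) x :
  (0 < 1 + l * dot th (T x)) = (0 < 1 + l * dot ths (T x)).
Proof.
have e := supp_eq th hd.
apply/idP/idP => h.
- have : supp T l ths x by rewrite -e.
  by [].
- have : supp T l th x by rewrite e.
  by [].
Qed.

Lemma prodE th x (l0 : l != 0) (hx : 0 < 1 + l * dot th (T x)) (Lb : R) :
  (1 + l * dot th (T x)) * (expR Lb) `^ (1 - l) * expR (- l * ln (Zf th)) =
  expR (l * (ln (1 + l * dot th (T x)) / l - ln (Zf th)) + (1 - l) * Lb).
Proof.
rewrite -expRM -{1}(@lnK _ (1 + l * dot th (T x))) ?posrE // -!expRD.
by congr expR; field.
Qed.

Lemma point_pos th (hd : dom_phi m T l th) (l0 : 0 < l) x :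
  (1 + l * dot th (T x)) * A x * expR (- l * ln (Zf th)) <=
  l * qdens m T l th x + (1 - l) * qdens m T l ths x.
Proof.
have ln0 : l != 0 by rewrite gt_eqF.
rewrite /A.
have [hx|hx] := boolP (0 < 1 + l * dot ths (T x)).
- have hx' : 0 < 1 + l * dot th (T x) by rewrite supp_iff.
  rewrite (q_on th hd x ln0 hx') (q_on ths hds x ln0 hx) prodE //.
  by apply: cvx; [exact: ltW | rewrite -subr_ge0 ltW].
- have hx' : ~~ (0 < 1 + l * dot th (T x)) by rewrite supp_iff.
  rewrite (q_off th hd x ln0 hx') (q_off ths hds x ln0 hx) powR0 ?gt_eqF //.
  by rewrite !mulr0 mul0r addr0.
Qed.

Lemma point_neg th (hd : dom_phi m T l th) (l0 : l < 0) x :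
  (1 - l) * qdens m T l ths x <=
  (1 + l * dot th (T x)) * A x * expR (- l * ln (Zf th)) + (- l) * qdens m T l th x.
Proof.
have ln0 : l != 0 by rewrite lt_eqF.
rewrite /A.
have [hx|hx] := boolP (0 < 1 + l * dot ths (T x)).
- have hx' : 0 < 1 + l * dot th (T x) by rewrite supp_iff.
  rewrite (q_on th hd x ln0 hx') (q_on ths hds x ln0 hx) prodE //.
  rewrite mulNr; exact: cvx_neg.
- have hx' : ~~ (0 < 1 + l * dot th (T x)) by rewrite supp_iff.
  rewrite (q_off th hd x ln0 hx') (q_off ths hds x ln0 hx) powR0 ?gt_eqF //.
  by rewrite !mulr0 mul0r addr0.
Qed.

Definition B th := \int[m]_x ((1 + l * dot th (T x)) * A x).

Lemma gAc_int th c : m.-integrable setT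
  (EFin \o fun x => (1 + l * dot th (T x)) * A x * c).
Proof. exact: (intRZr m c _ (gA_int th)). Qed.

Lemma Rq_int th (hd : dom_phi m T l th) k :
  m.-integrable setT (EFin \o fun x => k * qdens m T l th x).
Proof. exact: (intRZl m k _ (q_int th (notNy th) hd).1). Qed.

Lemma core_pos th (hd : dom_phi m T l th) (l0 : 0 < l) :
  B th * expR (- l * ln (Zf th)) <= 1.
Proof.
rewrite /B -RintegralZr //; last exact: gA_int.
have h := le_Rintegral measurableT (gAc_int th (expR (- l * ln (Zf th))))
  (intRD m _ _ (Rq_int th hd l) (Rq_int ths hds (1 - l)))
  (fun x _ => point_pos th hd l0 x).
apply: (le_trans h).
rewrite RintegralD //; [|exact: Rq_int|exact: Rq_int].
rewrite !RintegralZl //; [|exact: (q_int ths (notNy ths) hds).1|exact: (q_int th (notNy th) hd).1].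
by rewrite (q_int th (notNy th) hd).2 (q_int ths (notNy ths) hds).2 !mulr1 subrKC.
Qed.

Lemma core_neg th (hd : dom_phi m T l th) (l0 : l < 0) :
  1 <= B th * expR (- l * ln (Zf th)).
Proof.
rewrite /B -RintegralZr //; last exact: gA_int.
have h := le_Rintegral measurableT (Rq_int ths hds (1 - l))
  (intRD m _ _ (gAc_int th (expR (- l * ln (Zf th)))) (Rq_int th hd (- l)))
  (fun x _ => point_neg th hd l0 x).
move: h.
rewrite RintegralD //; [|exact: gAc_int|exact: Rq_int].
rewrite !RintegralZl //; [|exact: (q_int th (notNy th) hd).1|exact: (q_int ths (notNy ths) hds).1].
rewrite (q_int th (notNy th) hd).2 (q_int ths (notNy ths) hds).2 !mulr1.
set I := Rintegral _ _ _.
lra.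
Qed.

Lemma gAs x (l0 : l != 0) : (1 + l * dot ths (T x)) * A x =
  qdens m T l ths x * expR (l * ln (Zf ths)).
Proof.
rewrite /A.
have [hx|hx] := boolP (0 < 1 + l * dot ths (T x)).
- rewrite (q_on ths hds x l0 hx) -expRM -{1}(@lnK _ (1 + l * dot ths (T x))) ?posrE //.
  by rewrite -!expRD; congr expR; field.
- rewrite (q_off ths hds x l0 hx) powR0 ?mul0r ?mulr0 //.
  by rewrite gt_eqF.
Qed.

Lemma Bs (l0 : l != 0) : B ths = expR (l * ln (Zf ths)).
Proof.
rewrite /B; under eq_Rintegral do rewrite gAs //.
rewrite RintegralZr //; last exact: (q_int ths (notNy ths) hds).1.
by rewrite (q_int ths (notNy ths) hds).2 mul1r.
Qed.

Lemma q_ge0 th (hd : dom_phi m T l th) x : 0 <= qdens m T l th x.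
Proof.
have [Z0 _ hp] := domZ th (notNy th) hd.
by rewrite (qdens_fun th (notNy th) hd) divr_ge0 ?ee_ge0 // ltW.
Qed.

Lemma A0 (l0 : l = 0) x : A x = qdens m T l ths x.
Proof. by have := q_ge0 ths hds x; rewrite /A l0 subr0 => h; rewrite powRr1. Qed.

Lemma W1 (l0 : l = 0) : W = 1.
Proof.
rewrite /W; under eq_Rintegral do rewrite A0 //.
exact: (q_int ths (notNy ths) hds).2.
Qed.

Lemma q0E th (hd : dom_phi m T l th) (l0 : l = 0) x :
  qdens m T l th x = expR (dot th (T x) - ln (Zf th)).
Proof.
have [Z0 _ hp] := domZ th (notNy th) hd.
by rewrite (qdensE th hp Z0) /ee l0 eqxx expRB lnK.
Qed.

Lemma point0 th (hd : dom_phi m T l th) (l0 : l = 0) (c : R) x :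
  expR c * (A x + (dot th (T x) * A x - dot ths (T x) * A x) - c * A x) <=
  qdens m T l th x * expR (ln (Zf th) - ln (Zf ths)).
Proof.
rewrite !A0 // !q0E // -expRD.
have -> : dot th (T x) - ln (Zf th) + (ln (Zf th) - ln (Zf ths)) =
  (dot th (T x) - dot ths (T x) - c) + (c + (dot ths (T x) - ln (Zf ths))) by ring.
rewrite (expRD (dot th (T x) - dot ths (T x) - c)) (expRD c).
set E := expR (dot ths (T x) - ln (Zf ths)).
have -> : expR c * (E + (dot th (T x) * E - dot ths (T x) * E) - c * E) =
  (1 + (dot th (T x) - dot ths (T x) - c)) * (expR c * E) by ring.
apply: ler_wpM2r; last exact: expR_ge1Dx.
by rewrite mulr_ge0 // expR_ge0.
Qed.

Lemma core0 th (hd : dom_phi m T l th) (l0 : l = 0) :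
  dot th (escort_mean m T l ths) - ln (Zf th) <=
  dot ths (escort_mean m T l ths) - ln (Zf ths).
Proof.
rewrite !dot_escort W1 // !divr1.
set It := Rintegral _ _ (fun x => dot th (T x) * A x).
set Is := Rintegral _ _ (fun x => dot ths (T x) * A x).
set c := It - Is.
have hA1 := A_int.1.
have i1 : m.-integrable setT (EFin \o fun x =>
    A x + (dot th (T x) * A x - dot ths (T x) * A x) - c * A x).
  apply: intRB; last exact: intRZl.
  by apply: intRD => //; apply: intRB; exact: dotA_int.
have h := le_Rintegral measurableT (intRZl m (expR c) _ i1)
  (intRZr m (expR (ln (Zf th) - ln (Zf ths))) _ (q_int th (notNy th) hd).1)
  (fun x _ => point0 th hd l0 c x).
have iq := (q_int th (notNy th) hd).1.
have iT := dotA_int th.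
have iS := dotA_int ths.
have iTS := intRB m _ _ iT iS.
have iD := intRD m _ _ hA1 iTS.
have ic : m.-integrable setT (EFin \o fun x => c * A x) := intRZl m c _ hA1.
move: h.
rewrite (RintegralZl (expR c) measurableT i1).
rewrite (RintegralZr (expR (ln (Zf th) - ln (Zf ths))) measurableT iq).
rewrite (q_int th (notNy th) hd).2 mul1r.
rewrite (RintegralB measurableT iD ic) (RintegralD measurableT hA1 iTS).
rewrite (RintegralB measurableT iT iS) (RintegralZl c measurableT hA1).
have eW : \int[m]_x A x = 1 := W1 l0.
rewrite eW mulr1 -/It -/Is -/c.
have -> : 1 + c - c = 1 by ring.
rewrite mulr1 ler_expR.
move=> hc.
have hc' : It - Is <= ln (Zf th) - ln (Zf ths) := hc.
clear hc i1 ic.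
clearbody c It Is.
lra.
Qed.



Lemma coreL th (hd : dom_phi m T l th) (l0 : l != 0) (hb : 0 < B th) :
  ln (B th) / l <= ln (Zf th).
Proof.
have [Z0 _ _] := domZ th (notNy th) hd.
have e : ln (B th * expR (- l * ln (Zf th))) = ln (B th) - l * ln (Zf th).
  by rewrite lnM ?posrE ?expR_gt0 // expRK mulNr.
have Bp : 0 < B th * expR (- l * ln (Zf th)) by rewrite mulr_gt0 // expR_gt0.
case: (ltgtP l 0) => [ln0|lp|l00]; last by move: l0; rewrite l00 eqxx.
- have h := core_neg th hd ln0.
  rewrite -ler_ln ?posrE ?ltr01 // e ln1 in h.
  rewrite ler_ndivrMr //; lra.
- have h := core_pos th hd lp.
  rewrite -ler_ln ?posrE ?ltr01 // e ln1 in h.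
  rewrite ler_pdivrMr //; lra.
Qed.

Lemma BsL (l0 : l != 0) : ln (B ths) / l = ln (Zf ths).
Proof. by rewrite Bs // expRK mulrC mulrA mulVf // mul1r. Qed.

Definition Lt th := if l == 0 then dot th (escort_mean m T l ths)
  else ln (1 + l * dot th (escort_mean m T l ths)) / l.

Lemma lnBW th (l0 : l != 0) (hp : 0 < 1 + l * dot th (escort_mean m T l ths)) :
  ln (1 + l * dot th (escort_mean m T l ths)) = ln (B th) - ln W /\ 0 < B th.
Proof.
have Wp := A_int.2.
rewrite g_escort -/(B th) in hp *.
have hb : 0 < B th.
  have : 0 < B th / W * W by rewrite mulr_gt0.
  by rewrite divfK // gt_eqF.
split => //.
by rewrite lnM ?posrE ?invr_gt0 // lnV ?posrE.
Qed.

Lemma key th (hd : dom_phi m T l th)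
  (hp : 0 < 1 + l * dot th (escort_mean m T l ths))
  (hps : 0 < 1 + l * dot ths (escort_mean m T l ths)) :
  Lt th - ln (Zf th) <= Lt ths - ln (Zf ths).
Proof.
rewrite /Lt; have [l0|l0] := boolP (l == 0).
  exact: core0 th hd (eqP l0).
have [e1 b1] := lnBW th l0 hp.
have [e2 b2] := lnBW ths l0 hps.
rewrite e1 e2 !mulrBl BsL //.
have := coreL th hd l0 b1.
lra.
Qed.

Lemma Lts (l0 : l != 0) (hps : 0 < 1 + l * dot ths (escort_mean m T l ths)) :
  Lt ths - ln (Zf ths) = - (ln W / l).
Proof.
rewrite /Lt (negbTE l0).
have [e2 b2] := lnBW ths l0 hps.
rewrite e2 mulrBl BsL //; ring.
Qed.

Lemma psiE (l0 : l != 0) : psi m T l ths = (- (ln W / l))%:E.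
Proof.
rewrite /psi /renyi.
have h1 : (1 - l == 1) = false.
  apply/negbTE/eqP => h; move: l0; rewrite (_ : l = 0) ?eqxx //; lra.
rewrite h1.
have -> : (\int[m]_x ((qdens m T l ths x) `^ (1 - l))%:E)%E = W%:E := Rint_EFin m _ A_int.1.
rewrite /= A_int.2 -EFinM -EFinN.
have -> : 1 - (1 - l) = l by ring.
by rewrite mulrC.
Qed.

Lemma ln_q th (hd : dom_phi m T l th) y (hy : supp T l th y) :
  ln (qdens m T l th y) = (if l == 0 then dot th (T y)
    else ln (1 + l * dot th (T y)) / l) - ln (Zf th).
Proof.
have [l0|l0] := boolP (l == 0).
  by rewrite (q0E th hd (eqP l0)) expRK.
by rewrite (q_on th hd y l0 hy) expRK.
Qed.


Variables (N : nat) (xs : 'I_N -> X).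
Hypothesis hN : (0 < N)%N.
Hypothesis hx : forall (i : 'I_N) th, dom_phi m T l th -> supp T l th (xs i).
Hypothesis hesc : escort_mean m T l ths = N%:R^-1 *: \sum_(i < N) T (xs i).

Lemma main_sec :
  let Tbar := N%:R^-1 *: \sum_(i < N) T (xs i) in
  let ell := fun th => (\sum_(i < N) ln (qdens m T l th (xs i)))%:E in
  let F := fun th => (N%:R%:E * (clam l th Tbar - phi m T l th))%E in
  (l = 0 -> forall th, dom_phi m T l th -> (ell th <= ell ths)%E) /\
  (l < 0 ->
     (forall th, dom_phi m T l th -> (F th <= F ths)%E) /\
     (forall th, dom_phi m T l th -> (F th <= ell th)%E) /\
     (psi m T l ths <= N%:R^-1%:E * ell ths)%E) /\
  (0 < l ->
     (forall th, dom_phi m T l th -> (F th <= F ths)%E) /\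
     (forall th, dom_phi m T l th -> (ell th <= F th)%E) /\
     (forall th, dom_phi m T l th -> (N%:R^-1%:E * ell th <= psi m T l ths)%E)).
Proof.
move=> Tbar ell F.
have Npos : 0 < N%:R :> R by rewrite ltr0n.
have N0' : N%:R != 0 :> R by rewrite gt_eqF.
have dTb th : dot th (escort_mean m T l ths) = N%:R^-1 * \sum_(i < N) dot th (T (xs i)).
  by rewrite hesc dotZ dot_sum.
have gmean th : 1 + l * dot th (escort_mean m T l ths) =
    N%:R^-1 * \sum_(i < N) (1 + l * dot th (T (xs i))).
  rewrite dTb big_split /= sumr_const card_ord -mulr_natl mulr1 -mulr_sumr.
  by field; rewrite gt_eqF.
have gi th (hd : dom_phi m T l th) i : 0 < 1 + l * dot th (T (xs i)).
  exact: (hx i th hd).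
have gpos th (hd : dom_phi m T l th) : 0 < 1 + l * dot th (escort_mean m T l ths).
  rewrite gmean mulr_gt0 ?invr_gt0 //.
  apply: (lt_le_trans (gi th hd (Ordinal hN))).
  rewrite (bigD1 (Ordinal hN)) //= lerDl sumr_ge0 // => i _.
  exact: ltW (gi th hd i).
have hF th (hd : dom_phi m T l th) : F th = (N%:R * (Lt th - ln (Zf th)))%:E.
  rewrite /F /Tbar -hesc.
  have [Z0 _ hp] := domZ th (notNy th) hd.
  rewrite hp /clam /Lt.
  case: ifP => _; first by rewrite -EFinB -EFinM.
  by rewrite (gpos th hd) -EFinB -EFinM.
have hell th (hd : dom_phi m T l th) : ell th = (\sum_(i < N)
    ((if l == 0 then dot th (T (xs i)) else ln (1 + l * dot th (T (xs i))) / l)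
      - ln (Zf th)))%:E.
  rewrite /ell; congr EFin; apply: eq_bigr => i _.
  exact: (ln_q th hd (xs i) (hx i th hd)).
have keyN th (hd : dom_phi m T l th) :
    N%:R * (Lt th - ln (Zf th)) <= N%:R * (Lt ths - ln (Zf ths)).
  by apply: ler_wpM2l; [exact: ltW | exact: key th hd (gpos th hd) (gpos ths hds)].
have sumB (a : 'I_N -> R) (c : R) :
    \sum_(i < N) (a i - c) = N%:R * (N%:R^-1 * \sum_(i < N) a i - c).
  rewrite sumrB sumr_const card_ord -mulr_natl.
  by field.
have sumD (a : 'I_N -> R) (c k : R) :
    \sum_(i < N) (a i / k - c) = (\sum_(i < N) a i) / k - N%:R * c.
  by rewrite sumrB sumr_const card_ord -mulr_suml -[c *+ N]mulr_natl.
have jen th (hd : dom_phi m T l th) :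
    \sum_(i < N) ln (1 + l * dot th (T (xs i))) <=
    N%:R * ln (1 + l * dot th (escort_mean m T l ths)).
  by rewrite gmean; apply: ln_jensen => // i; exact: gi.
split.
  move=> l0 th hd.
  have l0' : l == 0 by rewrite l0.
  rewrite hell // hell // l0' !sumB -!dTb lee_fin.
  by have := keyN th hd; rewrite /Lt l0'.
have l0 : l <> 0 -> l != 0 by move=> h; apply/eqP.
split.
  move=> ln0.
  have l0' : l != 0 by rewrite lt_eqF.
  have Fle th (hd : dom_phi m T l th) : (F th <= F ths)%E.
    by rewrite hF // hF // lee_fin keyN.
  have Fell th (hd : dom_phi m T l th) : (F th <= ell th)%E.
    rewrite hF // hell // (negbTE l0') sumD lee_fin /Lt (negbTE l0').
    rewrite mulrBr lerD2r [_ * (_ / l)]mulrA.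
    by apply: ler_wnM2r; [rewrite invr_le0 ltW | exact: jen].
  split => //; split => //.
  have := Fell ths hds; rewrite hF // hell // Lts ?gpos // psiE //.
  rewrite -EFinM !lee_fin => h.
  by rewrite -(ler_pM2l Npos) mulrA divff ?mul1r // gt_eqF.
move=> lp.
have l0' : l != 0 by rewrite gt_eqF.
have Fle th (hd : dom_phi m T l th) : (F th <= F ths)%E.
  by rewrite hF // hF // lee_fin keyN.
have ellF th (hd : dom_phi m T l th) : (ell th <= F th)%E.
  rewrite hF // hell // (negbTE l0') sumD lee_fin /Lt (negbTE l0').
  rewrite mulrBr lerD2r [_ * (_ / l)]mulrA.
  by apply: ler_wpM2r; [rewrite invr_ge0 ltW | exact: jen].
split => //; split => //.
move=> th hd.
have h1 := ellF th hd; have h2 := Fle th hd.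
rewrite hF // in h1 h2; rewrite hF // Lts ?gpos // in h2.
rewrite psiE // -EFinM lee_fin.
move: h1 h2; rewrite hell // !lee_fin => h1 h2.
rewrite -(ler_pM2l Npos) mulrA divff ?mul1r ?gt_eqF //.
have e := hell th hd; rewrite /ell in e; case: e => e.
rewrite e; exact: le_trans h1 h2.
Qed.

End Aux.

Theorem proposition10 (R : realType) (n : nat) (d : measure_display)
  (X : measurableType d) (m : {measure set X -> \bar R}) (T : X -> 'rV[R]_n)
  (l : R) (N : nat) (x : 'I_N -> X) (th_star : 'rV[R]_n) :
  (forall i : 'I_n, measurable_fun setT (fun y => T y 0 i)) ->
  0 < 1 - l ->
  assumptionA m T l ->
  assumptionB m T l ->
  (0 < N)%N ->
  (forall (i : 'I_N) th, dom_phi m T l th -> supp T l th (x i)) ->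
  dom_phi m T l th_star ->
  escort_mean m T l th_star = N%:R^-1 *: \sum_(i < N) T (x i) ->
  let Tbar := N%:R^-1 *: \sum_(i < N) T (x i) in
  let ell := fun th => (\sum_(i < N) ln (qdens m T l th (x i)))%:E in
  let F := fun th => (N%:R%:E * (clam l th Tbar - phi m T l th))%E in
  (l = 0 -> forall th, dom_phi m T l th -> (ell th <= ell th_star)%E) /\
  (l < 0 ->
     (forall th, dom_phi m T l th -> (F th <= F th_star)%E) /\
     (forall th, dom_phi m T l th -> (F th <= ell th)%E) /\
     (psi m T l th_star <= N%:R^-1%:E * ell th_star)%E) /\
  (0 < l ->
     (forall th, dom_phi m T l th -> (F th <= F th_star)%E) /\
     (forall th, dom_phi m T l th -> (ell th <= F th)%E) /\
     (forall th, dom_phi m T l th -> (N%:R^-1%:E * ell th <= psi m T l th_star)%E)).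
Proof.
move=> hT al hA hB hN hx hds hesc.
exact: (main_sec m T l hT al hA hB th_star hds N x hN hx hesc).
Qed.
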